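(* Let $a,b$ be distinct positive real numbers and write $G=G(a,b)$, $L=L(a,b)$, $I=I(a,b)$. Then $$\frac{G\cdot I}{L}<\sqrt{I\cdot G}<L(I,G)<L,$$ $$\big(L(I,G)\big)^2<L\cdot L(I,G)<L(I^2,G^2)<L\cdot\frac{I+G}{2}.$$
   Context: For positive reals $x\neq y$: $G(x,y)=\sqrt{xy}$, logarithmic mean $L(x,y)=\frac{x-y}{\log x-\log y}$, identric mean $I(x,y)=\frac{1}{e}\left(\frac{x^x}{y^y}\right)^{1/(x-y)}$. *)

(* Defs.v *)
From Stdlib Require Import Reals.
Open Scope R_scope.

Definition Gm (x y : R) : R := sqrt (x * y).

Definition Lm (x y : R) : R := (x - y) / (ln x - ln y).

Definition Im (x y : R) : R :=
  / exp 1 * Rpower (Rpower x x / Rpower y y) (/ (x - y)).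

(* Main.v *)
From Stdlib Require Import Reals Lra Psatz.
From Coquelicot Require Import Coquelicot.
Require Import Defs.
From Stdlib Require Import Reals.
Open Scope R_scope.

Lemma MON (f f' : R -> R) (a b : R) : a < b ->
  (forall x, a <= x <= b -> is_derive f x (f' x)) ->
  (forall x, a < x < b -> 0 < f' x) -> f a < f b.
Proof.
  intros hab hd hp.
  destruct (MVT_cor2 f f' a b hab) as [c [hc1 hc2]].
  { intros c hc. apply is_derive_Reals. apply hd. exact hc. }
  assert (0 < f' c * (b - a)) by (apply Rmult_lt_0_compat; [apply hp; lra | lra]).
  lra.
Qed.

Lemma ANCH (f f' : R -> R) : f 0 = 0 ->
  (forall x, 0 <= x -> is_derive f x (f' x)) ->
  (forall x, 0 < x -> 0 < f' x) -> forall x, 0 < x -> 0 < f x.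
Proof.
  intros h0 hd hp x hx. rewrite <- h0. apply (MON f f'); auto.
  intros y hy. apply hd. lra. intros y hy. apply hp. lra.
Qed.

Lemma LIMT (f f' : R -> R) (K t : R) : 0 < K -> 0 < t ->
  (forall x, 0 < x -> is_derive f x (f' x)) ->
  (forall x, 0 < x -> 0 < f' x) ->
  (forall e, 0 < e < 1 -> -(K*e) <= f e) -> 0 < f t.
Proof.
  intros hK ht hd hp hb.
  assert (mono : forall x y, 0 < x -> x < y -> f x < f y).
  { intros x y hx hxy. apply (MON f f'); auto.
    intros z hz. apply hd. lra. intros z hz. apply hp. lra. }
  assert (h2 : 0 <= f (t/2)).
  { destruct (Rle_or_lt 0 (f (t/2))) as [h|h]; [exact h|exfalso].
    set (e := Rmin (Rmin (t/4) (1/2)) (- f (t/2) / (2*K))).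
    assert (he0 : 0 < e).
    { unfold e. apply Rmin_glb_lt. apply Rmin_glb_lt; lra.
      apply Rdiv_lt_0_compat; lra. }
    assert (he1 : e <= t/4) by (unfold e; eapply Rle_trans; [apply Rmin_l|apply Rmin_l]).
    assert (he2 : e <= 1/2) by (unfold e; eapply Rle_trans; [apply Rmin_l|apply Rmin_r]).
    assert (he3 : e <= - f (t/2) / (2*K)) by (unfold e; apply Rmin_r).
    assert (hfe := hb e ltac:(lra)).
    assert (hm := mono e (t/2) he0 ltac:(lra)).
    assert (K * e <= - f (t/2) / 2).
    { apply (Rmult_le_compat_l K) in he3; [|lra].
      replace (K * (- f (t / 2) / (2 * K))) with (- f (t/2) / 2) in he3 by (field; lra).
      exact he3. }
    lra. }
  assert (f (t/2) < f t) by (apply mono; lra). lra.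
Qed.


Lemma ch_sh (x : R) : cosh x * cosh x - sinh x * sinh x = 1.
Proof.
  unfold cosh, sinh. assert (exp x * exp (-x) = 1).
  { rewrite <- exp_plus. replace (x + - x) with 0 by ring. apply exp_0. }
  nra.
Qed.

Lemma sh_pos (x : R) : 0 < x -> 0 < sinh x.
Proof. intros. rewrite <- sinh_0. apply sinh_lt. lra. Qed.

Lemma ch_gt1 (x : R) : 0 < x -> 1 < cosh x.
Proof.
  intro hx. assert (0 < cosh x - 1); [|lra].
  apply (ANCH (fun t => cosh t - 1) sinh); auto.
  rewrite cosh_0; ring. intros y _. auto_derive; auto. ring.
  intros; apply sh_pos; auto.
Qed.

Lemma sh_gt (x : R) : 0 < x -> x < sinh x.
Proof.
  intro hx. assert (0 < sinh x - x); [|lra].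
  apply (ANCH (fun t => sinh t - t) (fun t => cosh t - 1)); auto.
  rewrite sinh_0; ring. intros y _. auto_derive; auto. ring.
  intros y hy; generalize (ch_gt1 y hy); lra.
Qed.

Lemma ch_sq (x : R) : 0 < x -> x^2 < 2 * (cosh x - 1).
Proof.
  intro hx. assert (0 < 2 * (cosh x - 1) - x^2); [|lra].
  apply (ANCH (fun t => 2 * (cosh t - 1) - t^2) (fun t => 2 * sinh t - 2 * t)); auto.
  rewrite cosh_0; ring. intros y _. auto_derive; auto. ring.
  intros y hy; generalize (sh_gt y hy); lra.
Qed.

Lemma tch_sh (x : R) : 0 < x -> sinh x < x * cosh x.
Proof.
  intro hx. assert (0 < x * cosh x - sinh x); [|lra].
  apply (ANCH (fun t => t * cosh t - sinh t) (fun t => t * sinh t)); auto.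
  rewrite sinh_0; ring. intros y _. auto_derive; auto. ring.
  intros y hy; generalize (sh_pos y hy); nra.
Qed.

Lemma tch_sh2 (x : R) : 0 < x -> x * cosh x - sinh x < x^2 * sinh x.
Proof.
  intro hx. assert (0 < x^2 * sinh x - (x * cosh x - sinh x)); [|lra].
  apply (ANCH (fun t => t^2 * sinh t - (t * cosh t - sinh t)) (fun t => t * sinh t + t^2 * cosh t)); auto.
  rewrite sinh_0; ring. intros y _. auto_derive; auto. ring.
  intros y hy; generalize (sh_pos y hy) (ch_gt1 y hy); nra.
Qed.

Lemma ch_tsh (x : R) : 0 < x -> cosh x - 1 < x * sinh x.
Proof.
  intro hx. assert (0 < x * sinh x - (cosh x - 1)); [|lra].
  apply (ANCH (fun t => t * sinh t - (cosh t - 1)) (fun t => t * cosh t)); auto.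
  rewrite sinh_0, cosh_0; ring. intros y _. auto_derive; auto. ring.
  intros y hy; generalize (ch_gt1 y hy); nra.
Qed.

Lemma carlson (x : R) : 0 < x -> 3 * sinh x < 2 * x + x * cosh x.
Proof.
  intro hx. assert (0 < 2 * x + x * cosh x - 3 * sinh x); [|lra].
  apply (ANCH (fun t => 2 * t + t * cosh t - 3 * sinh t) (fun t => 2 - 2 * cosh t + t * sinh t)); auto.
  rewrite sinh_0; ring. intros y _. auto_derive; auto. ring.
  apply (ANCH _ (fun t => t * cosh t - sinh t)).
  rewrite sinh_0, cosh_0; ring. intros y _. auto_derive; auto. ring.
  intros y hy; generalize (tch_sh y hy); lra.
Qed.

Definition Q0 t := t * sinh t * cosh t - 2 * sinh t ^ 2 + t ^ 2.
Definition Q1 t := t * (cosh t ^ 2 + sinh t ^ 2) - 3 * sinh t * cosh t + 2 * t.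
Definition Q2 t := 4 * t * sinh t * cosh t - 2 * (cosh t ^ 2 + sinh t ^ 2) + 2.
Definition Q3 t := 4 * t * (cosh t ^ 2 + sinh t ^ 2) - 4 * sinh t * cosh t.
Definition Q4 t := 16 * t * sinh t * cosh t.

Lemma Q0_pos (x : R) : 0 < x -> 0 < Q0 x.
Proof.
  apply (ANCH Q0 Q1). unfold Q0; rewrite sinh_0; ring.
  intros y _; unfold Q0, Q1; auto_derive; auto; ring.
  apply (ANCH Q1 Q2). unfold Q1; rewrite sinh_0; ring.
  intros y _; unfold Q1, Q2; auto_derive; auto; ring.
  apply (ANCH Q2 Q3). unfold Q2; rewrite sinh_0, cosh_0; ring.
  intros y _; unfold Q2, Q3; auto_derive; auto; ring.
  apply (ANCH Q3 Q4). unfold Q3; rewrite sinh_0; ring.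
  intros y _; unfold Q3, Q4; auto_derive; auto; ring.
  intros y hy; unfold Q4. generalize (sh_pos y hy) (ch_gt1 y hy). intros.
  assert (0 < y * sinh y) by nra. nra.
Qed.

Definition P0 t := sinh t ^ 2 + t * sinh t - t ^ 2 - t ^ 2 * cosh t.
Definition P1 t := 2 * sinh t * cosh t + sinh t - t * cosh t - 2 * t - t ^ 2 * sinh t.
Definition P2 t := 2 * (cosh t ^ 2 + sinh t ^ 2) - 3 * t * sinh t - 2 - t ^ 2 * cosh t.
Definition P3 t := 8 * sinh t * cosh t - 3 * sinh t - 5 * t * cosh t - t ^ 2 * sinh t.
Definition P4 t := 8 * (cosh t ^ 2 + sinh t ^ 2) - 8 * cosh t - 7 * t * sinh t - t ^ 2 * cosh t.
Definition P5 t := 32 * sinh t * cosh t - 15 * sinh t - 9 * t * cosh t - t ^ 2 * sinh t.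
Definition P6 t := 32 * (cosh t ^ 2 + sinh t ^ 2) - 24 * cosh t - 11 * t * sinh t - t ^ 2 * cosh t.

Lemma P0_pos (x : R) : 0 < x -> 0 < P0 x.
Proof.
  apply (ANCH P0 P1). unfold P0; rewrite sinh_0; ring.
  intros y _; unfold P0, P1; auto_derive; auto; ring.
  apply (ANCH P1 P2). unfold P1; rewrite sinh_0; ring.
  intros y _; unfold P1, P2; auto_derive; auto; ring.
  apply (ANCH P2 P3). unfold P2; rewrite sinh_0, cosh_0; ring.
  intros y _; unfold P2, P3; auto_derive; auto; ring.
  apply (ANCH P3 P4). unfold P3; rewrite sinh_0; ring.
  intros y _; unfold P3, P4; auto_derive; auto; ring.
  apply (ANCH P4 P5). unfold P4; rewrite sinh_0, cosh_0; ring.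
  intros y _; unfold P4, P5; auto_derive; auto; ring.
  apply (ANCH P5 P6). unfold P5; rewrite sinh_0; ring.
  intros y _; unfold P5, P6; auto_derive; auto; ring.
  intros y hy; unfold P6. generalize (sh_pos y hy) (ch_gt1 y hy) (sh_gt y hy) (ch_sq y hy) (ch_sh y). intros.
  assert (y * sinh y < sinh y * sinh y) by nra.
  assert (y^2 * cosh y < 2 * (cosh y - 1) * cosh y) by nra.
  nra.
Qed.

Definition SP t := 2 * sinh t + sinh t * cosh t - 2 * t * cosh t - t.
Lemma SP_pos (x : R) : 0 < x -> 0 < SP x.
Proof.
  apply (ANCH SP (fun t => cosh t ^ 2 + sinh t ^ 2 - 2 * t * sinh t - 1)).
  unfold SP; rewrite sinh_0; ring.
  intros y _; unfold SP; auto_derive; auto; ring.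
  intros y hy. generalize (sh_pos y hy) (sh_gt y hy) (ch_sh y). intros. nra.
Qed.

Lemma ln_nonneg (x : R) : 1 <= x -> 0 <= ln x.
Proof. intros h. destruct (Req_dec x 1) as [->|hn]. rewrite ln_1; lra.
  rewrite <- ln_1. left. apply ln_increasing; lra. Qed.

Lemma ln_le_sub1 (x : R) : 0 < x -> ln x <= x - 1.
Proof. intros h. generalize (exp_ineq1_le (ln x)). rewrite exp_ln; lra. Qed.

Definition sA t := t * cosh t / sinh t - 1.

Lemma sA_pos (t : R) : 0 < t -> 0 < sA t.
Proof. intros ht. unfold sA. generalize (sh_pos t ht) (tch_sh t ht); intros.
  apply Rlt_Rminus. apply (Rmult_lt_reg_r (sinh t)); auto.
  unfold Rdiv; rewrite Rmult_assoc, Rinv_l; lra. Qed.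

Lemma sA_le (e : R) : 0 < e < 1 -> sA e <= e.
Proof. intros he. unfold sA. generalize (sh_pos e ltac:(lra)) (tch_sh2 e ltac:(lra)); intros.
  assert (e * cosh e / sinh e < e^2 + 1).
  { apply (Rmult_lt_reg_r (sinh e)); auto.
    unfold Rdiv; rewrite Rmult_assoc, Rinv_l; lra. }
  nra. Qed.

Definition FA t := 2 * ln (sinh t / t) - sA t.

Lemma FA_pos (t : R) : 0 < t -> 0 < FA t.
Proof.
  intro ht.
  apply (LIMT FA (fun t => (Q0 t + t^2 * (cosh t ^ 2 - sinh t ^ 2 - 1)) / (t * sinh t ^ 2)) 1 t); try lra.
  - intros y hy. generalize (sh_pos y hy); intro hs. unfold FA, sA, Q0. auto_derive.
    + repeat split; try lra. apply Rdiv_lt_0_compat; lra.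
    + field. lra.
  - intros y hy. generalize (sh_pos y hy) (Q0_pos y hy) (ch_sh y); intros.
    replace (cosh y ^ 2 - sinh y ^ 2 - 1) with 0 by nra.
    apply Rdiv_lt_0_compat. nra. apply Rmult_lt_0_compat; nra.
  - intros e he. unfold FA. generalize (sA_le e he) (sh_gt e ltac:(lra)); intros.
    assert (0 <= ln (sinh e / e)).
    { apply ln_nonneg. apply (Rmult_le_reg_r e); [lra|].
      unfold Rdiv; rewrite Rmult_assoc, Rinv_l; lra. }
    lra.
Qed.

Definition FW t := ln (1 + cosh t - sinh t / t) - sA t.

Lemma sig_lt_ch (t : R) : 0 < t -> sinh t / t < cosh t.
Proof. intros ht. generalize (tch_sh t ht); intro.
  apply (Rmult_lt_reg_r t); auto. unfold Rdiv; rewrite Rmult_assoc, Rinv_l; lra. Qed.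

Lemma FW_pos (t : R) : 0 < t -> 0 < FW t.
Proof.
  intro ht.
  apply (LIMT FW (fun t => ((sinh t - t) * P0 t + t^2 * (t + t * cosh t - 2 * sinh t) * (cosh t ^ 2 - sinh t ^ 2 - 1))
     / (t * (t + t * cosh t - sinh t) * sinh t ^ 2)) 1 t); try lra.
  - intros y hy. generalize (sh_pos y hy) (sig_lt_ch y hy) (tch_sh y hy); intros.
    unfold FW, sA, P0. auto_derive.
    + repeat split; try lra.
    + field. repeat split; try lra.
  - intros y hy. generalize (sh_pos y hy) (P0_pos y hy) (ch_sh y) (sh_gt y hy) (tch_sh y hy); intros.
    replace (cosh y ^ 2 - sinh y ^ 2 - 1) with 0 by nra.
    apply Rdiv_lt_0_compat. nra. apply Rmult_lt_0_compat; [|nra]. nra.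
  - intros e he. unfold FW. generalize (sA_le e he) (sig_lt_ch e ltac:(lra)); intros.
    assert (0 <= ln (1 + cosh e - sinh e / e)) by (apply ln_nonneg; lra).
    lra.
Qed.

Definition FS t := sA t - ln ((2 * cosh t + 1) / 3).

Lemma FS_pos (t : R) : 0 < t -> 0 < FS t.
Proof.
  intro ht.
  apply (LIMT FS (fun t => (SP t + (2 * sinh t - t * (2 * cosh t + 1)) * (cosh t ^ 2 - sinh t ^ 2 - 1))
     / (sinh t ^ 2 * (2 * cosh t + 1))) 1 t); try lra.
  - intros y hy. generalize (sh_pos y hy) (ch_gt1 y hy); intros.
    unfold FS, sA, SP. auto_derive.
    + repeat split; try lra.
    + field. repeat split; try lra.
  - intros y hy. generalize (sh_pos y hy) (SP_pos y hy) (ch_sh y) (ch_gt1 y hy); intros.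
    replace (cosh y ^ 2 - sinh y ^ 2 - 1) with 0 by nra.
    apply Rdiv_lt_0_compat. nra. apply Rmult_lt_0_compat; nra.
  - intros e he. unfold FS. generalize (sA_pos e ltac:(lra)) (ch_tsh e ltac:(lra)) (ch_gt1 e ltac:(lra)); intros.
    generalize (ln_le_sub1 ((2 * cosh e + 1) / 3) ltac:(lra)); intro hl.
    assert (sinh e <= 3/2).
    { unfold sinh. assert (exp e <= exp 1) by (left; apply exp_increasing; lra).
      generalize exp_le_3 (exp_pos (-e)); intros. lra. }
    nra.
Qed.

Lemma exp_div (x y : R) : exp x / exp y = exp (x - y).
Proof. unfold Rdiv. rewrite <- exp_Ropp, <- exp_plus. f_equal; ring. Qed.

Lemma pos_diff (x y : R) : 0 < y - x -> x < y.
Proof. lra. Qed.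

Lemma alg (g sg s r : R) : 0 < g -> 0 < s -> 0 < r -> r < sg ->
  s * r < r * r - 1 -> r * r - 1 < s * sg -> 2 * sg < r * r + 1 ->
  (g * (g * (r * r)) / (g * sg) < g * r /\ g * r < (g * (r * r) - g) / s /\
   (g * (r * r) - g) / s < g * sg) /\
  (((g * (r * r) - g) / s) ^ 2 < g * sg * ((g * (r * r) - g) / s) /\
   g * sg * ((g * (r * r) - g) / s) < (g * g * (r * r) * (r * r) - g * g) / (2 * s) /\
   (g * g * (r * r) * (r * r) - g * g) / (2 * s) < g * sg * ((g * (r * r) + g) / 2)).
Proof.
  intros hg hs hr hrs h1 h2 h3.
  assert (hsg : 0 < sg) by lra.
  assert (hm : g * r < (g * (r * r) - g) / s).
  { apply pos_diff. replace ((g * (r * r) - g) / s - g * r) with (g * (r * r - 1 - s * r) / s) by (field; lra).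
    apply Rdiv_lt_0_compat; [|lra]. apply Rmult_lt_0_compat; lra. }
  assert (hl : (g * (r * r) - g) / s < g * sg).
  { apply pos_diff. replace (g * sg - (g * (r * r) - g) / s) with (g * (s * sg - (r * r - 1)) / s) by (field; lra).
    apply Rdiv_lt_0_compat; [|lra]. apply Rmult_lt_0_compat; lra. }
  assert (hmu : 0 < (g * (r * r) - g) / s) by (assert (0 < g * r) by nra; lra).
  split; [split; [|split]|split; [|split]]; auto.
  - apply pos_diff. replace (g * r - g * (g * (r * r)) / (g * sg)) with (g * r * (sg - r) / sg) by (field; lra).
    apply Rdiv_lt_0_compat; [|lra]. apply Rmult_lt_0_compat; [nra|lra].
  - apply pos_diff. set (mu := (g * (r * r) - g) / s) in *.
    replace (g * sg * mu - mu ^ 2) with (mu * (g * sg - mu)) by ring.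
    apply Rmult_lt_0_compat; lra.
  - apply pos_diff.
    replace ((g * g * (r * r) * (r * r) - g * g) / (2 * s) - g * sg * ((g * (r * r) - g) / s))
      with (g * g * (r * r - 1) * (r * r + 1 - 2 * sg) / (2 * s)) by (field; lra).
    apply Rdiv_lt_0_compat; [|lra]. assert (0 < r * r - 1) by nra.
    apply Rmult_lt_0_compat; [|lra]. apply Rmult_lt_0_compat; nra.
  - apply pos_diff.
    replace (g * sg * ((g * (r * r) + g) / 2) - (g * g * (r * r) * (r * r) - g * g) / (2 * s))
      with (g * g * (r * r + 1) * (s * sg - (r * r - 1)) / (2 * s)) by (field; lra).
    apply Rdiv_lt_0_compat; [|lra].
    apply Rmult_lt_0_compat; [|lra]. apply Rmult_lt_0_compat; nra.
Qed.

Lemma tfacts (t : R) : 0 < t ->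
  let sg := sinh t / t in let s := sA t in let r := exp (s / 2) in
  0 < s /\ 0 < r /\ r * r = exp s /\ r < sg /\ s * r < r * r - 1 /\
  r * r - 1 < s * sg /\ 2 * sg < r * r + 1.
Proof.
  intros ht sg s r.
  assert (hs : 0 < s) by (apply sA_pos; auto).
  assert (hr : 0 < r) by apply exp_pos.
  assert (hrr : r * r = exp s) by (unfold r; rewrite <- exp_plus; f_equal; field).
  assert (hS := sh_pos t ht).
  assert (hsg : 0 < sg) by (unfold sg; apply Rdiv_lt_0_compat; lra).
  assert (hsgs : s * sg = cosh t - sg).
  { unfold s, sg, sA. field. lra. }
  split; [auto|split; [auto|split; [auto|]]].
  split; [|split; [|split]].
  -
    assert (h := FA_pos t ht). unfold FA in h. fold sg s in h.
    assert (exp s < sg * sg).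
    { replace (sg * sg) with (exp (2 * ln sg)).
      apply exp_increasing; lra.
      replace (2 * ln sg) with (ln sg + ln sg) by ring. rewrite exp_plus, exp_ln; auto. }
    nra.
  - (* GM < LM *)
    assert (h := sh_gt (s/2) ltac:(lra)). unfold sinh in h.
    assert (r * exp (- (s/2)) = 1).
    { unfold r. rewrite <- exp_plus. replace (s/2 + - (s/2)) with 0 by ring. apply exp_0. }
    fold r in h. nra.
  -
    assert (h := FW_pos t ht). unfold FW in h. fold sg s in h.
    assert (exp s < 1 + cosh t - sg).
    { rewrite <- (exp_ln (1 + cosh t - sg)). apply exp_increasing; lra.
      generalize (sig_lt_ch t ht); fold sg; lra. }
    lra.
  - assert (h := FS_pos t ht). unfold FS in h. fold s in h.
    assert ((2 * cosh t + 1) / 3 < exp s).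
    { rewrite <- (exp_ln ((2 * cosh t + 1) / 3)). apply exp_increasing; lra.
      generalize (ch_gt1 t ht); lra. }
    assert (h2 := carlson t ht).
    assert (3 * sg < 2 + cosh t).
    { unfold sg. apply (Rmult_lt_reg_r t); auto.
      replace (3 * (sinh t / t) * t) with (3 * sinh t) by (field; lra). lra. }
    lra.
Qed.

Lemma main_gt (a b : R) : 0 < b -> b < a ->
  let G := Gm a b in
  let L := Lm a b in
  let I := Im a b in
  (G * I / L < sqrt (I * G) /\ sqrt (I * G) < Lm I G /\ Lm I G < L) /\
  (Lm I G ^ 2 < L * Lm I G /\ L * Lm I G < Lm (I ^ 2) (G ^ 2) /\
   Lm (I ^ 2) (G ^ 2) < L * ((I + G) / 2)).
Proof.
  intros hb hab G L I.
  assert (ha : 0 < a) by lra.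
  assert (huv : ln b < ln a) by (apply ln_increasing; lra).
  set (m := (ln a + ln b) / 2). set (t := (ln a - ln b) / 2).
  assert (ht : 0 < t) by (unfold t; lra).
  assert (hla : ln a = m + t) by (unfold m, t; field).
  assert (hlb : ln b = m - t) by (unfold m, t; field).
  assert (ea : a = exp m * exp t) by (rewrite <- exp_plus, <- hla, exp_ln; auto).
  assert (eb : b = exp m * exp (- t)).
  { rewrite <- exp_plus. replace (m + - t) with (m - t) by ring. rewrite <- hlb, exp_ln; auto. }
  assert (hS := sh_pos t ht).
  assert (hSe : exp t - exp (- t) <> 0) by (unfold sinh in hS; lra).
  assert (hG : G = exp m).
  { unfold G, Gm. rewrite ea, eb.
    replace (exp m * exp t * (exp m * exp (- t))) with (exp m * exp m).
    apply sqrt_square. left; apply exp_pos.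
    replace (exp m * exp t * (exp m * exp (- t))) with (exp m * exp m * (exp t * exp (-t))) by ring.
    rewrite <- (exp_plus t), Rplus_opp_r, exp_0. ring. }
  assert (hL : L = exp m * (sinh t / t)).
  { unfold L, Lm. rewrite hla, hlb. rewrite ea at 1. rewrite eb at 1. unfold sinh. field. lra. }
  assert (hI : I = exp (m + sA t)).
  { unfold I, Im, Rpower. rewrite hla, hlb, exp_div, ln_exp.
    rewrite <- exp_Ropp, <- exp_plus. f_equal.
    rewrite ea, eb. unfold sA, sinh, cosh.
    assert (exp m > 0) by apply exp_pos. field. split; [|lra].
    intro h. apply hSe. apply (Rmult_eq_reg_l (exp m)); lra. }
  clearbody G L I. subst G L I.
  destruct (tfacts t ht) as [hs [hr [hrr [h1 [h2 [h3 h4]]]]]].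
  set (s := sA t) in *. set (r := exp (s / 2)) in *. set (sg := sinh t / t) in *.
  set (g := exp m).
  assert (hIe : exp (m + s) = g * (r * r)) by (rewrite hrr; unfold g; apply exp_plus).
  assert (hsq : sqrt (exp (m + s) * g) = g * r).
  { rewrite hIe. replace (g * (r * r) * g) with ((g * r) * (g * r)) by ring.
    apply sqrt_square. unfold g. left. apply Rmult_lt_0_compat; auto. apply exp_pos. }
  assert (hLIG : Lm (exp (m + s)) g = (g * (r * r) - g) / s).
  { unfold Lm. replace (ln (exp (m + s)) - ln g) with s by (unfold g; rewrite !ln_exp; ring). rewrite hIe. reflexivity. }
  assert (hLI2 : Lm (exp (m + s) ^ 2) (g ^ 2) = (g * g * (r * r) * (r * r) - g * g) / (2 * s)).
  { assert (p2 : forall x, exp x ^ 2 = exp (2 * x)).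
    { intro x. replace (2 * x) with (x + x) by ring. rewrite exp_plus. ring. }
    unfold Lm. unfold g. rewrite !p2, !ln_exp. rewrite <- !p2. fold g. rewrite hIe.
    f_equal; ring. }
  rewrite hsq, hLIG, hLI2, hIe.
  apply alg; auto. apply exp_pos.
Qed.

Lemma Gm_sym a b : Gm a b = Gm b a.
Proof. unfold Gm. rewrite Rmult_comm. reflexivity. Qed.

Lemma Lm_sym a b : 0 < a -> 0 < b -> a <> b -> Lm a b = Lm b a.
Proof.
  intros ha hb hab. unfold Lm.
  assert (ln a <> ln b) by (intro h; apply hab; apply ln_inv; auto).
  field. split; lra.
Qed.

Lemma Im_sym a b : a <> b -> Im a b = Im b a.
Proof.
  intros hab. unfold Im, Rpower. rewrite !exp_div, !ln_exp. f_equal. f_equal.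
  field. split; lra.
Qed.

Theorem corollary1 (a b : R) (ha : 0 < a) (hb : 0 < b) (hab : a <> b) :
  let G := Gm a b in
  let L := Lm a b in
  let I := Im a b in
  (G * I / L < sqrt (I * G) /\ sqrt (I * G) < Lm I G /\ Lm I G < L) /\
  (Lm I G ^ 2 < L * Lm I G /\ L * Lm I G < Lm (I ^ 2) (G ^ 2) /\
   Lm (I ^ 2) (G ^ 2) < L * ((I + G) / 2)).
Proof.
  destruct (Rlt_or_le b a) as [h|h].
  - apply main_gt; auto.
  - rewrite (Gm_sym a b), (Lm_sym a b), (Im_sym a b); auto.
    apply main_gt; auto. lra.
Qed.
Print Assumptions corollary1.
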